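(* Let $d\in\mathbb{N}$ and let $G$ be a countably infinite $d$-degenerate graph. Then $G$ does not contain $d+1$ pairwise disjoint minimal ruling sets; that is, $\mathrm{rul}(G)\le d$.
   Context: A countably infinite graph $G$ is $d$-degenerate if there is an enumeration $v_1,v_2,\dots$ of $V(G)$ (indexed by $\mathbb{N}$) such that each $v_i$ has at most $d$ neighbors in $\{v_1,\dots,v_{i-1}\}$. A set $X\subseteq V(G)$ is ruling if $X$ is finite and all but finitely many vertices of $V(G)\setminus X$ have a neighbor in $X$; a minimal ruling set is a ruling set no proper subset of which is ruling. $\mathrm{rul}(G)$ is the smallest $t\in\{0,1,2,\dots\}$ such that $G$ has at most $t$ pairwise disjoint minimal ruling sets ($\infty$ if no such $t$ exists). *)

(* Defs.v *)
From mathcomp Require Import all_boot.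
Set Implicit Arguments. Unset Strict Implicit. Unset Printing Implicit Defensive.

(* A countably infinite simple graph, with vertex set identified with nat
   (any countably infinite vertex set is in bijection with nat). *)
Definition simple_graph (adj : rel nat) : Prop :=
  (forall x y, adj x y = adj y x) /\ (forall x, ~~ adj x x).

Definition degenerate (adj : rel nat) (d : nat) : Prop :=
  exists v : nat -> nat, bijective v /\
    forall i, \sum_(j < i) adj (v i) (v j) <= d.

(* Ruling set: a finite set X (given by a list) such that all but finitely
   many vertices outside X have a neighbour in X. *)
Definition ruling (adj : rel nat) (X : seq nat) : Prop :=
  exists N, forall u, N <= u -> u \notin X -> exists2 x, x \in X & adj u x.

Definition minimal_ruling (adj : rel nat) (X : seq nat) : Prop :=
  ruling adj X /\
  forall Y : seq nat, {subset Y <= X} -> ~ {subset X <= Y} -> ~ ruling adj Y.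

Definition rul_le (adj : rel nat) (t : nat) : Prop :=
  ~ exists F : 'I_t.+1 -> seq nat,
      (forall i, minimal_ruling adj (F i)) /\
      (forall i j, i != j -> forall x, x \in F i -> x \notin F j).

(* Main.v *)
Require Import Defs.
From mathcomp Require Import all_boot zify.

Lemma common_N (t : nat) (P : 'I_t -> nat -> Prop) :
  (forall i, exists N, forall u, N <= u -> P i u) ->
  exists N, forall i u, N <= u -> P i u.
Proof.
move=> H.
have: forall s : seq 'I_t, exists N, forall i, i \in s -> forall u, N <= u -> P i u.
  elim=> [|a s [N IH]]; first by exists 0.
  have [Na Ha] := H a.
  exists (maxn Na N) => i; rewrite inE => /orP [/eqP -> | Hi] u Hu.
    by apply: Ha; apply: leq_trans Hu; rewrite leq_maxl.
  by apply: IH => //; apply: leq_trans Hu; rewrite leq_maxr.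
move/(_ (enum 'I_t)) => [N HN]; exists N => i u; apply: HN; by rewrite mem_enum.
Qed.

Lemma sum_bool_card n (b : 'I_n -> bool) :
  \sum_(j < n) b j = #|[pred j | b j]|.
Proof.
rewrite -sum1_card [RHS]big_mkcond /=; apply: eq_bigr => j _; rewrite inE; by case: (b j).
Qed.

Theorem mainTheorem4 (d : nat) (adj : rel nat) :
  simple_graph adj -> degenerate adj d -> rul_le adj d.
Proof.
move=> _ [v [[w vw wv] Hdeg]] [F [Hmin Hdisj]].
have [N HN] : exists N, forall (i : 'I_d.+1) u, N <= u -> u \notin F i -> exists2 x, x \in F i & adj u x.
  apply: common_N => i; by have [[N HN] _] := Hmin i; exists N.
set K := \max_(i < d.+1) \max_(x <- F i) w x.
set Smax := \max_(i < d.+1) \max_(x <- F i) x.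
set u := (\max_(j < K.+1) v j) + N + Smax + 1.
have inS i x : x \in F i -> (w x <= K) && (x <= Smax).
  move=> Hx; apply/andP; split.
    apply: leq_trans (leq_bigmax_cond (F := fun i : 'I_d.+1 => \max_(x <- F i) w x) i isT).
    by rewrite (big_rem x Hx) /= leq_maxl.
  apply: leq_trans (leq_bigmax_cond (F := fun i : 'I_d.+1 => \max_(x <- F i) x) i isT).
  by rewrite (big_rem x Hx) /= leq_maxl.
have uS i : u \notin F i.
  apply/negP => /inS /andP [_ H]; move: H; rewrite /u; lia.
have Ku : K < w u.
  rewrite ltnNge; apply/negP => H.
  have := leq_bigmax_cond (P := xpredT) (F := fun j : 'I_K.+1 => v j) (Ordinal (n := K.+1) (m := w u) H) isT.
  by rewrite /= wv /u -!addnA -[X in _ <= X]addn0 leq_add2l addn1 addnS.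
have has_i i : has (adj u) (F i).
  have Nu : N <= u by rewrite /u -!addnA; apply: leq_trans (leq_addr _ N) (leq_addl _ _).
  have [x Hx Ha] := HN i u Nu (uS i).
  by apply/hasP; exists x.
pose x i := nth 0 (F i) (find (adj u) (F i)).
have xF i : x i \in F i by rewrite /x mem_nth // -has_find.
have xa i : adj u (x i) by apply: nth_find.
have xK i : w (x i) < w u by have /andP [H _] := inS i _ (xF i); apply: leq_ltn_trans Ku.
pose g i := Ordinal (xK i).
have ginj : injective g.
  move=> i j /(congr1 val) /= /(congr1 v); rewrite !wv => Hij.
  apply/eqP; apply/negPn/negP => /Hdisj /(_ (x i) (xF i)); by rewrite Hij xF.
have := Hdeg (w u); rewrite wv sum_bool_card.
move=> Hle.
have Hc : #|image g 'I_d.+1| = d.+1 by rewrite card_image // card_ord.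
have : #|image g 'I_d.+1| <= #|[pred j : 'I_(w u) | adj u (v j)]|.
  apply: subset_leq_card; apply/subsetP => j /imageP [i _ ->] /=.
  by rewrite inE /= wv xa.
rewrite Hc => H2; have := leq_trans H2 Hle; by rewrite ltnn.
Qed.
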